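(* For any integers $k\ge1$ and $N\ge1$, there exist real numbers $a,b$ such that every term of the generalized $k$-FL sequence $\{S^{(a,b)}_{k,n}\}_{n\ge0}$ is an integer and $|\mathcal{Z}(\{S^{(a,b)}_{k,n}\}_{n\ge0})|\ge N$.
   Context: For real $k,a,b$, the generalized $k$-FL sequence is $S^{(a,b)}_{k,0}=2b$, $S^{(a,b)}_{k,1}=bk+a$, $S^{(a,b)}_{k,n}=kS^{(a,b)}_{k,n-1}+S^{(a,b)}_{k,n-2}$ ($n\ge2$). For an integer sequence $\mathcal{A}=\{a_n\}_{n\ge0}$, a prime $p$ is a primitive prime divisor for $a_n$ if $p\mid a_n$ but $p\nmid a_m$ for all $0\le m<n$ with $a_m\neq0$; the Zsigmondy set is $\mathcal{Z}(\mathcal{A})=\{n\ge0: a_n \text{ has no primitive prime divisor}\}$, and $|S|$ denotes cardinality. *)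

(* Defs.v *)
From Stdlib Require Import Reals ZArith Znumtheory List.
Open Scope R_scope.

Fixpoint FL (k a b : R) (n : nat) : R :=
  match n with
  | O => 2 * b
  | S m =>
      match m with
      | O => b * k + a
      | S p => k * FL k a b m + FL k a b p
      end
  end.

Definition primitive_prime_divisor (s : nat -> Z) (n : nat) (p : Z) : Prop :=
  prime p /\ (p | s n)%Z /\
  (forall m : nat, (m < n)%nat -> s m <> 0%Z -> ~ (p | s m)%Z).

Definition in_zsigmondy (s : nat -> Z) (n : nat) : Prop :=
  ~ (exists p : Z, primitive_prime_divisor s n p).

(* |Z(s)| >= N : Z(s) contains at least N distinct elements
   (the set may be infinite). *)
Definition zsigmondy_card_ge (s : nat -> Z) (N : nat) : Prop :=
  exists l : list nat, NoDup l /\ length l = N /\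
    (forall n, In n l -> in_zsigmondy s n).

(* Main.v *)
Require Import Defs.
From Stdlib Require Import Reals ZArith Znumtheory List Lia Lra FinFun.

Fixpoint Fz (k : Z) (n : nat) : Z :=
  match n with
  | O => 0%Z
  | S m => match m with
           | O => 1%Z
           | S p => (k * Fz k m + Fz k p)%Z
           end
  end.

Fixpoint Pr (k : Z) (n : nat) : Z :=
  match n with
  | O => 1%Z
  | S j => (Pr k j * Fz k (S j))%Z
  end.

Lemma Fz_pos k : (1 <= k)%Z -> forall n, (0 <= Fz k n)%Z /\ (1 <= Fz k (S n))%Z.
Proof.
  intros Hk n; induction n as [|n [IH1 IH2]]; [simpl; lia|].
  split; [lia|].
  change (Fz k (S (S n))) with (k * Fz k (S n) + Fz k n)%Z. nia.
Qed.

Lemma Pr_pos k : (1 <= k)%Z -> forall n, (1 <= Pr k n)%Z.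
Proof.
  intros Hk n; induction n; [simpl; lia|].
  change (Pr k (S n)) with (Pr k n * Fz k (S n))%Z.
  pose proof (Fz_pos k Hk n); nia.
Qed.

Lemma Pr_div k : forall m j, (1 <= j <= m)%nat -> (Fz k j | Pr k m)%Z.
Proof.
  induction m; intros j Hj; [lia|].
  simpl. destruct (Nat.eq_dec j (S m)) as [->|Hne].
  - apply Z.divide_factor_r.
  - apply Z.divide_mul_l. apply IHm. lia.
Qed.

Lemma FL_eq k M : forall n,
  FL (IZR k) (IZR M) 0 n = IZR (M * Fz k n) /\
  FL (IZR k) (IZR M) 0 (S n) = IZR (M * Fz k (S n)).
Proof.
  induction n as [|n [IH1 IH2]].
  - simpl. split; [rewrite Z.mul_0_r; lra|rewrite Z.mul_1_r; lra].
  - split; [exact IH2|].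
    change (FL (IZR k) (IZR M) 0 (S (S n))) with
      (IZR k * FL (IZR k) (IZR M) 0 (S n) + FL (IZR k) (IZR M) 0 n)%R.
    rewrite IH1, IH2.
    change (Fz k (S (S n))) with (k * Fz k (S n) + Fz k n)%Z.
    rewrite <- mult_IZR, <- plus_IZR. f_equal. ring.
Qed.

Theorem theorem4p7 (k : Z) (N : nat) :
  (1 <= k)%Z -> (1 <= N)%nat ->
  exists a b : R, exists s : nat -> Z,
    (forall n : nat, FL (IZR k) a b n = IZR (s n)) /\
    zsigmondy_card_ge s N.
Proof.
  intros Hk HN.
  set (M := Pr k (S N)).
  exists (IZR M), 0%R, (fun n => (M * Fz k n)%Z).
  split.
  - intro n. apply (FL_eq k M n).
  - exists (map (fun i => (i + 2)%nat) (seq 0 N)). split; [|split].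
    + apply FinFun.Injective_map_NoDup; [intros x y H; lia|apply seq_NoDup].
    + rewrite length_map, length_seq. reflexivity.
    + intros n Hn. apply in_map_iff in Hn. destruct Hn as [i [<- Hi]].
      apply in_seq in Hi.
      intros [p [Hp [Hd Hprim]]].
      assert (HM : (1 <= M)%Z) by (apply Pr_pos; exact Hk).
      apply (Hprim 1%nat); [lia| simpl; lia |].
      simpl. rewrite Z.mul_1_r.
      destruct (prime_mult p Hp _ _ Hd) as [H|H]; [exact H|].
      eapply Z.divide_trans; [exact H|]. apply Pr_div. lia.
Qed.
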